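(* Let $A\in\mathbb{R}^{m\times n}$ and let $A=P_1-R_1+S_1=P_2-R_2+S_2$ be two double proper regular (respectively, double proper weak regular) splittings of $A$ such that $N(R_2)\supseteq N(P_2)$, $R(R_2)\subseteq R(P_2)$, $-1\notin\sigma(R_2P_1^{\dagger})$ and $\widehat{\mathcal{A}}^{\dagger}\geq 0$, where $\widehat{\mathcal{A}}=(I+R_2P_1^{\dagger})A$. Then $\rho(\mathcal{W}_{12})<1$, where $$\mathcal{W}_{12}=\begin{pmatrix} P_2^{\dagger}R_2P_1^{\dagger}R_1-P_2^{\dagger}S_2 & -P_2^{\dagger}R_2P_1^{\dagger}S_1\\ I & 0\end{pmatrix}.$$
   Context: For $M\in\mathbb{R}^{m\times n}$, $M^{\dagger}$ is its Moore–Penrose inverse, $R(M)$, $N(M)$ its range and null space; inequalities are entrywise; $\rho$ is the spectral radius, $\sigma$ the spectrum. A double splitting $A=P-R+S$ is a double proper splitting if $R(P)=R(A)$ and $N(P)=N(A)$; it is double proper regular if moreover $P^{\dagger}\geq0$, $R\geq0$, $S\leq0$; double proper weak regular if moreover $P^{\dagger}\geq 0$, $P^{\dagger}R\geq 0$, $P^{\dagger}S\leq 0$. *)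

(* Defs.v *)
From HB Require Import structures.
From mathcomp Require Import all_boot all_order all_algebra.
From mathcomp Require Import reals complex.
From Stdlib Require Import ClassicalEpsilon.
Set Implicit Arguments. Unset Strict Implicit. Unset Printing Implicit Defensive.
Import Order.TTheory GRing.Theory Num.Theory.
Local Open Scope ring_scope.

Section Defs.
Variable R : realType.

Definition is_MP_inverse m n (A : 'M[R]_(m, n)) (X : 'M[R]_(n, m)) : Prop :=
  [/\ A *m X *m A = A, X *m A *m X = X,
      (A *m X)^T = A *m X & (X *m A)^T = X *m A].

(* The Moore--Penrose inverse A^dagger (chosen as the unique matrix
   satisfying the Penrose equations; it always exists for real matrices). *)
Definition pinv m n (A : 'M[R]_(m, n)) : 'M[R]_(n, m) :=
  epsilon (inhabits 0) (is_MP_inverse A).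

Definition range_sp m n (M : 'M[R]_(m, n)) (y : 'cV[R]_m) : Prop :=
  exists x : 'cV[R]_n, M *m x = y.
Definition null_sp m n (M : 'M[R]_(m, n)) (x : 'cV[R]_n) : Prop :=
  M *m x = 0.

Definition mx_ge0 m n (M : 'M[R]_(m, n)) : Prop := forall i j, 0 <= M i j.
Definition mx_le0 m n (M : 'M[R]_(m, n)) : Prop := forall i j, M i j <= 0.

Definition double_proper_splitting m n (A P Rm S : 'M[R]_(m, n)) : Prop :=
  [/\ A = P - Rm + S,
      (forall y, range_sp P y <-> range_sp A y) &
      (forall x, null_sp P x <-> null_sp A x)].

Definition double_proper_regular m n (A P Rm S : 'M[R]_(m, n)) : Prop :=
  [/\ double_proper_splitting A P Rm S, mx_ge0 (pinv P), mx_ge0 Rm & mx_le0 S].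

Definition double_proper_weak_regular m n (A P Rm S : 'M[R]_(m, n)) : Prop :=
  [/\ double_proper_splitting A P Rm S, mx_ge0 (pinv P),
      mx_ge0 (pinv P *m Rm) & mx_le0 (pinv P *m S)].

Definition cmx n (M : 'M[R]_n) : 'M[R[i]]_n := map_mx (fun x => x%:C%C) M.

Definition spectrum n (M : 'M[R]_n) : pred R[i] :=
  fun z => eigenvalue (cmx M) z.

Definition eigen_seq n (M : 'M[R]_n) : seq R[i] :=
  sval (closed_field_poly_normal (char_poly (cmx M))).

Definition spectral_radius n (M : 'M[R]_n) : R :=
  \big[Num.max/0]_(z <- eigen_seq M) ComplexField.Normc.normc z.

End Defs.

(* Main.v *)
Require Import Defs.
From HB Require Import structures.
From mathcomp Require Import all_boot all_order all_algebra.
From mathcomp Require Import reals complex.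
From mathcomp Require Import ring.
From Stdlib Require Import ClassicalEpsilon.
Set Implicit Arguments. Unset Strict Implicit. Unset Printing Implicit Defensive.
Import Order.TTheory GRing.Theory Num.Theory.
Local Open Scope ring_scope.
Lemma rV_gram0 (F : realFieldType) k (u : 'rV[F]_k) : u *m u^T = 0 -> u = 0.
Proof.
move=> /matrixP /(_ 0 0); rewrite !mxE => H.
have H0 : forall i, true -> 0 <= u 0 i * u^T i 0 by move=> i _; rewrite mxE -expr2 sqr_ge0.
apply/rowP => i; rewrite mxE.
have := (psumr_eq0P H0 H); move/(_ i isT); rewrite mxE -expr2 => /eqP; rewrite sqrf_eq0 => /eqP; by [].
Qed.

Lemma gram_unit (F : realFieldType) r k (M : 'M[F]_(r,k)) : row_free M -> M *m M^T \in unitmx.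
Proof.
move=> fM; rewrite -row_free_unit; apply: inj_row_free => v H.
have : (v *m M) *m (v *m M)^T = 0 by rewrite trmx_mul !mulmxA -(mulmxA v) H mul0mx.
by move/rV_gram0 => /eqP; rewrite mulmx_free_eq0 // => /eqP ->.
Qed.

Lemma MP_factor (R : realType) m r n (F : 'M[R]_(m,r)) (G : 'M[R]_(r,n)) :
  G *m G^T \in unitmx -> F^T *m F \in unitmx ->
  is_MP_inverse (F *m G) (G^T *m invmx (G *m G^T) *m invmx (F^T *m F) *m F^T).
Proof.
move=> uG uF.
set iG := invmx (G *m G^T); set iF := invmx (F^T *m F).
have iGT : iG^T = iG by rewrite /iG trmx_inv trmx_mul trmxK.
have iFT : iF^T = iF by rewrite /iF trmx_inv trmx_mul trmxK.
have hG : G *m G^T *m iG = 1%:M by rewrite mulmxV.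
have hF : iF *m (F^T *m F) = 1%:M by rewrite mulVmx.
have hG' : forall p (X : 'M[R]_(p, r)), X *m G *m G^T *m iG = X.
  by move=> p X; rewrite -[RHS]mulmx1 -hG !mulmxA.
have hF' : forall p (X : 'M[R]_(p, r)), X *m iF *m F^T *m F = X.
  by move=> p X; rewrite -[RHS]mulmx1 -hF !mulmxA.
have AX : F *m G *m (G^T *m iG *m iF *m F^T) = F *m iF *m F^T by rewrite !mulmxA hG'.
have XA : G^T *m iG *m iF *m F^T *m (F *m G) = G^T *m iG *m G by rewrite !mulmxA hF'.
split.
- by rewrite AX !mulmxA hF'.
- by rewrite XA !mulmxA hG'.
- by rewrite AX !trmx_mul trmxK iFT !mulmxA.
- by rewrite XA !trmx_mul trmxK iGT !mulmxA.
Qed.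

Lemma MP_exists (R : realType) m n (A : 'M[R]_(m,n)) : exists X, is_MP_inverse A X.
Proof.
set F := col_base A; set G := row_base A.
have uG : G *m G^T \in unitmx by apply: gram_unit; exact: row_base_free.
have uF : F^T *m F \in unitmx.
  rewrite -{2}(trmxK F); apply: gram_unit.
  by rewrite /row_free mxrank_tr; exact: col_base_full.
have := MP_factor uG uF; rewrite mulmx_base; eauto.
Qed.

Lemma col_mulmx (T : pzRingType) p q k (M : 'M[T]_(p,q)) (Y : 'M[T]_(q,k)) j :
  M *m col j Y = col j (M *m Y).
Proof. by apply/matrixP => i l; rewrite !mxE; apply: eq_bigr => t _; rewrite !mxE. Qed.

Lemma pinv_MP (R : realType) m n (A : 'M[R]_(m,n)) : is_MP_inverse A (pinv A).
Proof. rewrite /pinv; apply: epsilon_spec; exact: MP_exists. Qed.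

Lemma null_incl_mx (R : realType) p p' n (M : 'M[R]_(p,n)) (N : 'M[R]_(p',n)) :
  (forall x, null_sp M x -> null_sp N x) ->
  forall k (Y : 'M[R]_(n,k)), M *m Y = 0 -> N *m Y = 0.
Proof.
move=> H k Y MY; apply/matrixP => i j.
have : null_sp N (col j Y).
  by apply: H; rewrite /null_sp col_mulmx MY; apply/matrixP => a b; rewrite !mxE.
rewrite /null_sp col_mulmx => /matrixP /(_ i 0); rewrite !mxE => -> //.
Qed.

Lemma range_incl_mx (R : realType) p n n' (M : 'M[R]_(p,n)) (N : 'M[R]_(p,n')) :
  (forall y, range_sp M y -> range_sp N y) ->
  forall k (Y : 'M[R]_(n,k)), exists Z : 'M[R]_(n',k), M *m Y = N *m Z.
Proof.
move=> H k Y.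
have : forall j : 'I_k, exists z : 'cV[R]_n', N *m z = col j (M *m Y).
  by move=> j; apply: H; exists (col j Y); rewrite col_mulmx.
case/fin_all_exists => f Hf.
exists (\matrix_(i, j) f j i 0); apply/matrixP => i j.
have := Hf j => /matrixP /(_ i 0); rewrite !mxE => <-.
by apply: eq_bigr => t _; rewrite !mxE.
Qed.

Lemma null_proj (R : realType) p p' n (M : 'M[R]_(p,n)) (X : 'M[R]_(n,p)) (N : 'M[R]_(p',n)) :
  is_MP_inverse M X -> (forall x, null_sp M x -> null_sp N x) -> N *m (X *m M) = N.
Proof.
case=> h1 _ _ _ H.
have : N *m (1%:M - X *m M) = 0.
  apply: (null_incl_mx H); by rewrite mulmxBr mulmx1 mulmxA h1 subrr.
by rewrite mulmxBr mulmx1 => /eqP; rewrite subr_eq0 => /eqP.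
Qed.

Lemma null_proj2 (R : realType) p p' n (M : 'M[R]_(p,n)) (X : 'M[R]_(n,p))
   (N : 'M[R]_(p',n)) (Y : 'M[R]_(n,p')) :
  is_MP_inverse M X -> is_MP_inverse N Y ->
  (forall x, null_sp M x -> null_sp N x) -> X *m M *m Y = Y.
Proof.
move=> hM [y1 y2 y3 y4] H.
have hP : 1%:M - X *m M = (1%:M - X *m M)^T.
  by case: hM => _ _ _ h4; rewrite linearB /= trmx1 h4.
have e0 : N *m (1%:M - X *m M) = 0.
  by rewrite mulmxBr mulmx1 (null_proj hM H) subrr.
have e1 : (1%:M - X *m M) *m (Y *m N) = 0.
  by rewrite hP -y4 -trmx_mul -mulmxA e0 mulmx0 trmx0.
have : (1%:M - X *m M) *m Y = 0.
  by rewrite -y2 mulmxA e1 mul0mx.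
by rewrite mulmxBl mul1mx => /eqP; rewrite subr_eq0 => /eqP.
Qed.

Lemma range_proj2 (R : realType) p n n' (M : 'M[R]_(p,n)) (X : 'M[R]_(n,p))
   (N : 'M[R]_(p,n')) (Y : 'M[R]_(n',p)) (Z : 'M[R]_(n',n)) :
  is_MP_inverse M X -> is_MP_inverse N Y -> M = N *m Z -> X *m (N *m Y) = X.
Proof.
move=> [x1 x2 x3 x4] [y1 y2 y3 y4] MNZ.
have hP : 1%:M - N *m Y = (1%:M - N *m Y)^T by rewrite linearB /= trmx1 y3.
have e0 : (1%:M - N *m Y) *m N = 0 by rewrite mulmxBl mul1mx y1 subrr.
have e1 : M^T *m (1%:M - N *m Y) = 0.
  by rewrite MNZ trmx_mul hP -mulmxA -trmx_mul e0 trmx0 mulmx0.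
have : X *m (1%:M - N *m Y) = 0.
  by rewrite -x2 -(mulmxA X M X) -x3 trmx_mul mulmxA -(mulmxA _ M^T) e1 mulmx0.
by rewrite mulmxBr mulmx1 => /eqP; rewrite subr_eq0 eq_sym => /eqP.
Qed.

Lemma ge0_mulmx (C : numDomainType) p q r (X : 'M[C]_(p,q)) (Y : 'M[C]_(q,r)) :
  (forall i j, 0 <= X i j) -> (forall i j, 0 <= Y i j) -> forall i j, 0 <= (X *m Y) i j.
Proof. by move=> hX hY i j; rewrite mxE; apply: sumr_ge0 => k _; apply: mulr_ge0. Qed.

Lemma core_zero (C : numDomainType) n m (w : 'rV[C]_n) (Pp : 'M[C]_(n,m))
  (V : 'M[C]_(m,n)) (Xp : 'M[C]_(n,m)) :
  (forall j, 0 <= w 0 j) -> (forall i j, 0 <= Pp i j) -> (forall i j, 0 <= Xp i j) ->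
  Xp = Pp + (Pp *m V) *m Xp ->
  (forall j, w 0 j <= (w *m (Pp *m V)) 0 j) -> w = 0.
Proof.
move=> hw hP hX eX hT.
set d := w *m (Pp *m V) - w.
have hw' : forall i j, 0 <= w i j by move=> i j; rewrite ord1.
have hd : forall i j, 0 <= d i j.
  by move=> i j; rewrite ord1 /d !mxE subr_ge0; have := hT j; rewrite !mxE.
have wd : w + d = w *m (Pp *m V) by rewrite /d addrC subrK.
have e : w *m Pp + d *m Xp = 0.
  have h : w *m Xp = w *m Pp + (w + d) *m Xp by rewrite {1}eX mulmxDr mulmxA wd.
  move: h; rewrite mulmxDl addrCA => /esym /(canRL (addKr _)); rewrite addNr //.
have hwP : w *m Pp = 0.
  apply/matrixP => i k; have := congr1 (fun M : 'M[C]_(1,m) => M i k) e; rewrite mxE [in RHS]mxE => /eqP.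
  rewrite paddr_eq0 ?(ge0_mulmx hw' hP) ?(ge0_mulmx hd hX) // => /andP [/eqP -> _].
  by rewrite mxE.
have hT0 : w *m (Pp *m V) = 0 by rewrite mulmxA hwP mul0mx.
apply/matrixP => i j; rewrite ord1 [RHS]mxE; apply/le_anti; rewrite hw andbT.
by have := hT j; rewrite hT0 mxE.
Qed.

Lemma ent_scaleB (C : pzRingType) p q (a : C) (X Y : 'M[C]_(p,q)) i j :
  (a *: X - Y) i j = a * X i j - Y i j.
Proof. by rewrite !mxE. Qed.
Lemma ent_scale (C : pzRingType) p q (a : C) (X : 'M[C]_(p,q)) i j :
  (a *: X) i j = a * X i j.
Proof. by rewrite !mxE. Qed.

Lemma ent_B (C : pzRingType) p q (X Y : 'M[C]_(p,q)) i j :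
  (X - Y) i j = X i j - Y i j.
Proof. by rewrite !mxE. Qed.

Lemma eig_small (C : numFieldType) n m (B D : 'M[C]_n) (Pp : 'M[C]_(n,m))
  (V : 'M[C]_(m,n)) (Xp : 'M[C]_(n,m)) (lam : C) (v : 'rV[C]_(n + n)) :
  (forall i j, 0 <= B i j) -> (forall i j, D i j <= 0) -> Pp *m V = B - D ->
  (forall i j, 0 <= Pp i j) -> (forall i j, 0 <= Xp i j) ->
  Xp = Pp + (Pp *m V) *m Xp ->
  v *m block_mx B (- D) 1%:M 0 = lam *: v -> 1 <= `|lam| -> v = 0.
Proof.
move=> hB hD eT hP hX eX hv hl.
have lam0 : 0 < `|lam| by apply: lt_le_trans hl; exact: ltr01.
rewrite -(hsubmxK v) in hv *; set z1 := lsubmx v in hv *; set z2 := rsubmx v in hv *.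
move: hv; rewrite mul_row_block scale_row_mx => /eq_row_mx [E1 E2].
rewrite mulmx1 in E1; rewrite mulmx0 addr0 mulmxN in E2.
have ez2 : z2 = lam *: z1 - z1 *m B by rewrite -E1 addrC addKr.
have key : forall j, lam ^+ 2 * z1 0 j = lam * (z1 *m B) 0 j - (z1 *m D) 0 j.
  have KM : lam ^+ 2 *: z1 = lam *: (z1 *m B) - z1 *m D.
    by rewrite E2 ez2 scalerBr scalerA expr2 addrC subrK.
  by move=> j; rewrite -ent_scale KM ent_scaleB.
set w := \row_j `|z1 0 j|.
have hw : forall j, 0 <= w 0 j by move=> j; rewrite mxE.
have hwT : forall j, w 0 j <= (w *m (Pp *m V)) 0 j.
  move=> j; rewrite eT mulmxBr ent_B.
  have eb : `|(z1 *m B) 0 j| <= (w *m B) 0 j.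
    rewrite !mxE; apply: le_trans (ler_norm_sum _ _ _) _; apply: ler_sum => i _.
    by rewrite normrM (ger0_norm (hB i j)) /w !mxE.
  have ed : `|(z1 *m D) 0 j| <= - (w *m D) 0 j.
    rewrite !mxE -sumrN; apply: le_trans (ler_norm_sum _ _ _) _; apply: ler_sum => i _.
    by rewrite normrM (ler0_norm (hD i j)) /w !mxE mulrN.
  have c0 : 0 <= - (w *m D) 0 j by apply: le_trans ed; exact: normr_ge0.
  have h1 : `|lam| * (`|lam| * w 0 j) <= `|lam| * ((w *m B) 0 j - (w *m D) 0 j).
    rewrite mulrA -expr2 -normrX [w 0 j]mxE -normrM key.
    apply: le_trans (ler_normB _ _) _.
    rewrite normrM mulrDr lerD // ?ler_wpM2l //.
    by apply: le_trans ed _; exact: ler_peMl.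
  rewrite ler_pM2l // in h1.
  by apply: le_trans h1; exact: ler_peMl.
have w0 := core_zero hw hP hX eX hwT.
have z10 : z1 = 0.
  apply/matrixP => i j; rewrite ord1 [RHS]mxE; apply/eqP; rewrite -normr_eq0.
  by have := congr1 (fun M : 'M[C]_(1,n) => M 0 j) w0; rewrite !mxE => ->.
by rewrite ez2 z10 scaler0 mul0mx subr0 row_mx0.
Qed.

Lemma zid (M : zmodType) (p b c x y : M) : (p - b + c) + (b - x + y) = p - (x - c - y).
Proof. by rewrite !opprB -!addrA; congr (_ + _); rewrite addrCA addKr addrA addrC. Qed.
Lemma normC_eq (R:rcfType) (z : R[i]) : `|z| = ((ComplexField.Normc.normc z)%:C)%C. Proof. by case: z. Qed.

Lemma mx_ge0M (R : realType) p q r (X : 'M[R]_(p,q)) (Y : 'M[R]_(q,r)) :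
  mx_ge0 X -> mx_ge0 Y -> mx_ge0 (X *m Y).
Proof. exact: ge0_mulmx. Qed.

Lemma mx_le0M (R : realType) p q r (X : 'M[R]_(p,q)) (Y : 'M[R]_(q,r)) :
  mx_ge0 X -> mx_le0 Y -> mx_le0 (X *m Y).
Proof.
move=> hX hY i j; rewrite mxE; rewrite -oppr_ge0 -sumrN; apply: sumr_ge0 => k _.
by rewrite -mulrN; apply: mulr_ge0; rewrite ?oppr_ge0.
Qed.

Lemma mx_geB (R : realType) p q (X Y : 'M[R]_(p,q)) :
  mx_ge0 X -> mx_le0 Y -> mx_ge0 (X - Y).
Proof. by move=> hX hY i j; rewrite !mxE; apply: addr_ge0; rewrite ?oppr_ge0. Qed.

Theorem theorem3p3 (R : realType) (m n : nat) (A P1 R1 S1 P2 R2 S2 : 'M[R]_(m, n)) :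
  ((double_proper_regular A P1 R1 S1 /\ double_proper_regular A P2 R2 S2) \/
   (double_proper_weak_regular A P1 R1 S1 /\ double_proper_weak_regular A P2 R2 S2)) ->
  (forall x, null_sp P2 x -> null_sp R2 x) ->
  (forall y, range_sp R2 y -> range_sp P2 y) ->
  ~ spectrum (R2 *m pinv P1) (-1) ->
  mx_ge0 (pinv ((1%:M + R2 *m pinv P1) *m A)) ->
  spectral_radius
    (block_mx (pinv P2 *m R2 *m pinv P1 *m R1 - pinv P2 *m S2)
              (- (pinv P2 *m R2 *m pinv P1 *m S1))
              (1%:M : 'M[R]_n) (0 : 'M[R]_n)) < 1.
Proof.
move=> hsplit hnull hrange hspec hAhp.
have [[A1 rg1 nl1] [A2 rg2 nl2] P2p0 Bge0 Dle0] :
  [/\ double_proper_splitting A P1 R1 S1, double_proper_splitting A P2 R2 S2,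
      mx_ge0 (pinv P2), mx_ge0 (pinv P2 *m R2 *m pinv P1 *m R1 - pinv P2 *m S2)
    & mx_le0 (pinv P2 *m R2 *m pinv P1 *m S1)].
  case: hsplit => [[[s1 g1 r1 q1] [s2 g2 r2 q2]] | [[s1 g1 r1 q1] [s2 g2 r2 q2]]].
    split => //.
      exact: mx_geB (mx_ge0M (mx_ge0M (mx_ge0M g2 r2) g1) r1) (mx_le0M g2 q2).
    exact: mx_le0M (mx_ge0M (mx_ge0M g2 r2) g1) q1.
  split => //.
    by rewrite -mulmxA; exact: mx_geB (mx_ge0M r2 r1) q2.
  by rewrite -mulmxA; exact: mx_le0M r2 q1.
set P1p := pinv P1 in hspec hAhp Bge0 Dle0 *.
set P2p := pinv P2 in P2p0 Bge0 Dle0 *.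
set B := P2p *m R2 *m P1p *m R1 - P2p *m S2 in Bge0 *.
set D := P2p *m R2 *m P1p *m S1 in Dle0 *.
set K := 1%:M + R2 *m P1p in hAhp *.
set Ah := K *m A in hAhp *.
set Ahp := pinv Ah in hAhp *.
set V := R2 *m P1p *m R1 - S2 - R2 *m P1p *m S1.
have eT : P2p *m V = B - D by rewrite /V !mulmxBr !mulmxA.
have eR2 : R2 *m (P1p *m P1) = R2.
  apply: null_proj (pinv_MP P1) _ => x h.
  by apply: hnull; apply/(nl2 x); apply/(nl1 x).
have eAh : Ah = P2 - V.
  have eRA : R2 *m P1p *m A = R2 - R2 *m P1p *m R1 + R2 *m P1p *m S1.
    by rewrite {1}A1 mulmxDr mulmxBr -(mulmxA R2 P1p P1) eR2.
  by rewrite /Ah /K mulmxDl mul1mx eRA {1}A2 zid.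
have eV : V = P2 - Ah by rewrite eAh opprB addrC subrK.
have nP2Ah : forall x, null_sp P2 x -> null_sp Ah x.
  move=> x /(nl2 x) h; by rewrite /null_sp /Ah -mulmxA h mulmx0.
have e1 : P2p *m P2 *m Ahp = Ahp := null_proj2 (pinv_MP P2) (pinv_MP Ah) nP2Ah.
have uK : K \in unitmx.
  case uK: (K \in unitmx) => //; exfalso; apply: hspec.
  have : kermx K != 0 by rewrite kermx_eq0 row_free_unit uK.
  case/rowV0Pn => u /sub_kermxP uK0 u0.
  apply/eigenvalueP; exists (map_mx (real_complex R) u); last by rewrite map_mx_eq0.
  have eu : u *m (R2 *m P1p) = - u.
    by apply/eqP; rewrite -addr_eq0 addrC -{1}(mulmx1 u) -mulmxDr -/K uK0.
  by rewrite /cmx -/(map_mx (real_complex R) _) -map_mxM eu map_mxN scaleN1r.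
have [Y2 eY2] := range_incl_mx hrange (1%:M : 'M[R]_n).
have [Y3 eY3] := range_incl_mx (fun y => (rg2 y).1) (1%:M : 'M[R]_n).
rewrite !mulmx1 in eY2 eY3.
have eKA : Ah = A *m (1%:M + Y3 *m Y2 *m P1p *m A).
  by rewrite /Ah /K mulmxDl mul1mx mulmxDr mulmx1 eY2 eY3 !mulmxA.
have sub1 : (Ah^T <= A^T)%MS by rewrite eKA trmx_mul submxMl.
have rk : \rank Ah^T = \rank A^T.
  by rewrite !mxrank_tr /Ah -mxrank_tr trmx_mul mxrankMfree ?mxrank_tr // row_free_unit unitmx_tr.
have : (A^T <= Ah^T)%MS by case: (mxrank_leqif_sup sub1) => _ <-; rewrite rk.
case/submxP => Dm eD.
have eP2 : P2 = Ah *m (Dm^T *m Y3).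
  by rewrite eY3 mulmxA -[A]trmxK eD trmx_mul trmxK.
have e2 : P2p *m (Ah *m Ahp) = P2p := range_proj2 (pinv_MP P2) (pinv_MP Ah) eP2.
have eX : Ahp = P2p + (P2p *m V) *m Ahp.
  by rewrite eV mulmxBr mulmxBl e1 -mulmxA e2 addrC subrK.
rewrite /spectral_radius.
set W := block_mx _ _ _ _.
have hz : forall z, z \in eigen_seq W -> ComplexField.Normc.normc z < 1.
  move=> z; rewrite /eigen_seq; case: (closed_field_poly_normal _) => r /= er zr.
  have rz : root (char_poly (cmx W)) z.
    by rewrite /root er hornerZ; move: zr; rewrite -root_prod_XsubC /root => /eqP ->; rewrite mulr0.
  rewrite -eigenvalue_root_char in rz.
  case/eigenvalueP: rz => v hv v0.
  rewrite ltNge; apply/negP => hge.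
  have hl : 1 <= `|z| by rewrite normC_eq -(rmorph1 (real_complex R)) lecR.
  move/negP: v0; apply.
  apply/eqP; apply: (@eig_small _ n m (map_mx (real_complex R) B)
     (map_mx (real_complex R) D) (map_mx (real_complex R) P2p)
     (map_mx (real_complex R) V) (map_mx (real_complex R) Ahp) z v) => //.
  - by move=> i j; rewrite mxE ler0c; exact: Bge0.
  - by move=> i j; rewrite mxE -oppr_ge0 -rmorphN ler0c oppr_ge0; exact: Dle0.
  - by rewrite -map_mxM eT map_mxB.
  - by move=> i j; rewrite mxE ler0c; exact: P2p0.
  - by move=> i j; rewrite mxE ler0c; exact: hAhp.
  - by rewrite {1}eX map_mxD !map_mxM.
  - by move: hv; rewrite /cmx -/(map_mx (real_complex R) _) /W map_block_mx map_mxN map_mx1 map_mx0.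
elim: (eigen_seq W) hz => [|a s IH] hz; first by rewrite big_nil ltr01.
rewrite big_cons gt_max hz ?mem_head //=; apply: IH => z zs; apply: hz.
by rewrite in_cons zs orbT.
Qed.
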